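(* Let $l\ge2$ be even and let $a,b\in\{1,\dots,l-1\}$ be such that $X=X(\mathbb{Z}_{2l},\{\pm a,\pm b\})$ is a connected $4$-regular circulant graph with $a+b\ne l$. Then $X$ does not admit perfect state transfer between (distinct) vertex type states.
   Context: $X(\mathbb{Z}_n,S)$ (with $S\subseteq\mathbb{Z}_n\setminus\{0\}$, $S=-S$) has vertex set $\mathbb{Z}_n$ and edges $\{x,y\}$ with $y-x\in S$. For a graph with symmetric arc set $\mathcal{A}$ ($t((x,y))=y$, $(x,y)^{-1}=(y,x)$): boundary matrix $d_{x,a}=\frac{1}{\sqrt{\deg x}}\delta_{x,t(a)}$, shift matrix $R_{a,b}=\delta_{a,b^{-1}}$, $U=R(2d^*d-I_{\mathcal{A}})$. Perfect state transfer between vertex type states means $U^\tau d^*e_x=\gamma d^*e_y$ for some distinct vertices $x,y$, some $\tau\in\mathbb{Z}_{\ge1}$ and some $|\gamma|=1$ ($e_x$ the standard unit vector). *)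

(* Defs.v *)
From mathcomp Require Import all_boot all_order all_algebra all_field.
Set Implicit Arguments. Unset Strict Implicit. Unset Printing Implicit Defensive.
Import Order.TTheory GRing.Theory Num.Theory.
Local Open Scope ring_scope.

(* Circulant graph X(Z_n, S): vertices 'I_n (residues mod n),
   x ~ y iff (y - x) mod n lies in S (S given as a list of residues). *)
Definition circ_adj (n : nat) (S : seq nat) : rel 'I_n :=
  fun x y => ((y + n - x) %% n)%N \in S.
Arguments circ_adj n S x y : clear implicits.

Section Walk.
Variables (V : finType) (adj : rel V).

Definition arc := {p : V * V | adj p.1 p.2}.

Definition deg (x : V) : nat := #|[pred y | adj x y]|.

Definition connected_graph : Prop := forall x y : V, connect adj x y.

Definition regular (k : nat) : Prop := forall x : V, deg x = k.

Definition terminus (e : arc) : V := (val e).2.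

Definition bdry (x : V) (e : arc) : algC :=
  (sqrtC (deg x)%:R)^-1 * (x == terminus e)%:R.

Definition bdry_adj (e : arc) (x : V) : algC := (bdry x e)^*.

Definition shift (e f : arc) : algC :=
  (val e == ((val f).2, (val f).1))%:R.

Definition coin (e f : arc) : algC :=
  2 * (\sum_(x : V) bdry_adj e x * bdry x f) - (e == f)%:R.

Definition walkU (e f : arc) : algC := \sum_(g : arc) shift e g * coin g f.

Definition applyU (v : arc -> algC) : arc -> algC :=
  fun e => \sum_(f : arc) walkU e f * v f.

Definition vertex_state (x : V) : arc -> algC := fun e => bdry_adj e x.

Definition PST_vertex : Prop :=
  exists (x y : V) (tau : nat) (gamma : algC),
    [/\ x != y, (0 < tau)%N, `|gamma| = 1 &
        forall e : arc, iter tau applyU (vertex_state x) e = gamma * vertex_state y e].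
End Walk.

(* Main.v *)
Require Import Defs.
From mathcomp Require Import all_boot all_order all_algebra all_field.
From mathcomp Require Import ring lra.
From Stdlib Require Import Lia.
From mathcomp Require Import zify.
Set Implicit Arguments. Unset Strict Implicit. Unset Printing Implicit Defensive.
Import Order.TTheory GRing.Theory Num.Theory.

Section NT.
Local Open Scope ring_scope.

Lemma geo_Aint (z : algC) (r : nat) : z \in Aint -> (1 - z ^+ r) / (1 - z) \in Aint.
Proof.
move=> zA; have [->|nz1] := eqVneq z 1.
  by rewrite subrr invr0 mulr0.
have nz : 1 - z != 0 by rewrite subr_eq0 eq_sym.
have -> : 1 - z ^+ r = (1 - z) * \sum_(i < r) z ^+ i.
  by rewrite -[1 - z ^+ r]opprB subrX1 -mulNr opprB.
by rewrite mulrC mulrA mulVf // mul1r rpred_sum // => i _; rewrite rpredX.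
Qed.

Lemma wsum_id (u : algC) (m : nat) :
  (1 - u) * (\sum_(i < m) (i.+1)%:R * u ^+ i) = \sum_(i < m) u ^+ i - m%:R * u ^+ m.
Proof.
elim: m => [|m IH]; first by rewrite !big_ord0 mulr0 mul0r subr0.
rewrite !big_ord_recr /= mulrDr IH exprS; set s := \sum_(_ < _) _.
rewrite -[(m.+1)%:R]natr1; ring.
Qed.

Lemma sumr_Aint (u : algC) (m : nat) : u ^+ m = 1 -> u != 1 -> u \in Aint ->
  m%:R / (1 - u) \in Aint.
Proof.
move=> um u1 uA.
have nz : 1 - u != 0 by rewrite subr_eq0 eq_sym.
have geo0 : \sum_(i < m) u ^+ i = 0.
  have : (u - 1) * \sum_(i < m) u ^+ i = 0 by rewrite -subrX1 um subrr.
  by move/eqP; rewrite mulf_eq0 subr_eq0 (negbTE u1) /= => /eqP.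
have := wsum_id u m; rewrite geo0 um mulr1 sub0r => key.
have -> : m%:R / (1 - u) = - \sum_(i < m) (i.+1)%:R * u ^+ i.
  apply: (mulfI nz); rewrite mulrN key.
  by rewrite mulrC mulfVK // opprK.
rewrite rpredN; apply: rpred_sum => i _; apply: rpredM; last exact: rpredX.
by apply: Aint_Cnat; apply: natr_nat.
Qed.


Lemma one_neq_m1 : (1 : algC) != -1.
Proof.
apply/eqP=> h; have : (2 : algC) == 0 by rewrite -[2]/(1 + 1) {1}h addNr.
by rewrite pnatr_eq0.
Qed.

Lemma two_pow_Aint (k : nat) (z : algC) : z \in Aint -> z ^+ (2 ^ k) = -1 ->
  2 / (1 - z) ^+ (2 ^ k) \in Aint.
Proof.
elim: k z => [|k IH] z zA hz.
  rewrite expn0 expr1 in hz *; rewrite hz.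
  have -> : (1 - -1 : algC) = 2 by ring.
  by rewrite divff // pnatr_eq0.
have hz2 : (z ^+ 2) ^+ (2 ^ k) = -1 by rewrite -exprM -expnS.
have := IH _ (rpredX _ zA) hz2.
have zn1 : z != 1.
  by apply/eqP=> z1; move: hz; rewrite z1 expr1n; apply/eqP; exact: one_neq_m1.
have zm1 : z != -1.
  apply/eqP=> z1; move: hz; rewrite z1 expnS exprM sqrrN !expr1n.
  by apply/eqP; exact: one_neq_m1.
have nzA : 1 - z != 0 by rewrite subr_eq0 eq_sym.
have nzB : 1 + z != 0 by rewrite addrC addr_eq0.
have q := geo_Aint (2 ^ k.+1).+1 zA.
rewrite exprS hz mulrN1 opprK in q.
move=> h; have := rpredM h (rpredX (2 ^ k) q).
set P := (2 ^ k)%N.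
have -> : 1 - z ^+ 2 = (1 - z) * (1 + z) by ring.
have -> : (1 - z) ^+ (2 ^ k.+1)%N = ((1 - z) ^+ P) ^+ 2 by rewrite -exprM mulnC -expnS.
rewrite exprMn !expr_div_n.
have nA : (1 - z) ^+ P != 0 by rewrite expf_neq0.
have nB : (1 + z) ^+ P != 0 by rewrite expf_neq0.
move: nA nB; set A := (1 - z) ^+ P; set B := (1 + z) ^+ P => nA nB.
move=> H; have E : 2 / A ^+ 2 = 2 / (A * B) * (B / A) by field; rewrite ?nA ?nB.
by rewrite E.
Qed.


Lemma notAint (q t : nat) : odd q -> (0 < t)%N -> q%:R / 2 ^+ t \notin Aint.
Proof.
move=> oq tpos; apply/negP => hA.
have hr : q%:R / 2 ^+ t \in Crat by rewrite rpred_div ?rpredX ?rpred_nat.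
have hi := Cint_rat_Aint hr hA.
have h2 : (q%:R / 2 : algC) \in Num.int.
  have -> : q%:R / 2 = q%:R / 2 ^+ t * 2 ^+ t.-1 :> algC.
    case: t tpos {hA hr hi} => // t _ /=; rewrite exprS.
    by field; rewrite expf_neq0 // pnatr_eq0.
  by rewrite rpredM // rpredX // rpred_nat.
have : (q%:R / 2 : algC) \is a Num.nat by rewrite natrEint h2 divr_ge0 ?ler0n.
case/natrP => k hk.
have : q%:R = (2 * k)%:R :> algC by rewrite natrM -hk mulrC divfK // pnatr_eq0.
move/eqP; rewrite eqr_nat => /eqP hq.
by move: oq; rewrite hq oddM.
Qed.

Lemma pow2_root (e : nat) (v : algC) : v ^+ (2 ^ e) = 1 ->
  v = 1 \/ exists k, v ^+ (2 ^ k) = -1.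
Proof.
elim: e v => [|e IH] v hv; first by left; rewrite expn0 expr1 in hv.
have hw : (v ^+ (2 ^ e)) ^+ 2 = 1 by rewrite -exprM mulnC -expnS.
have : (v ^+ (2 ^ e) - 1) * (v ^+ (2 ^ e) + 1) = 0.
  by rewrite -subr_sqr hw expr1n subrr.
move/eqP; rewrite mulf_eq0 subr_eq0 addr_eq0 => /orP[/eqP|/eqP] h.
  exact: IH.
by right; exists e.
Qed.

Lemma classify (v : algC) (e m : nat) : v \in Aint -> v ^+ (2 ^ e * m) = 1 ->
  [\/ v = 1, exists k, v ^+ (2 ^ k) = -1 | m%:R / (1 - v) \in Aint].
Proof.
move=> vA hv; set u := v ^+ (2 ^ e).
have hu : u ^+ m = 1 by rewrite /u -exprM.
have [u1|u1] := eqVneq u 1.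
  by case: (pow2_root u1) => h; [apply: Or31 | apply: Or32].
apply: Or33.
have v1 : v != 1 by apply/eqP => v1; move: u1; rewrite /u v1 expr1n eqxx.
have nzu : 1 - u != 0 by rewrite subr_eq0 eq_sym.
have h1 := sumr_Aint hu u1 (rpredX _ vA).
have h2 := geo_Aint (2 ^ e) vA.
have -> : m%:R / (1 - v) = m%:R / (1 - u) * ((1 - u) / (1 - v)) by rewrite mulrA divfK.
exact: rpredM.
Qed.


Lemma caseAB (x y : algC) (q P : nat) : x != 0 -> y != 0 -> odd q -> (1 < P)%N ->
  x * y / 2 \in Aint -> q%:R / x \in Aint -> 2 / y ^+ P \in Aint -> False.
Proof.
move=> nx ny oq P1 XA hx hy.
have := rpredM (rpredM (rpredX P XA) (rpredX P hx)) hy.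
have -> : (x * y / 2) ^+ P * (q%:R / x) ^+ P * (2 / y ^+ P)
          = (q ^ P)%:R / 2 ^+ P.-1.
  rewrite !expr_div_n !exprMn natrX.
  have eP : (2 : algC) ^+ P = 2 * 2 ^+ P.-1 by rewrite -exprS prednK // ltnW.
  rewrite eP.
  field; rewrite ?expf_neq0 ?pnatr_eq0 //.
by apply/negP; apply: notAint; rewrite ?oddX ?oq ?orbT // -ltnS prednK // ltnW.
Qed.

Lemma caseBB (x y : algC) (P1 P2 : nat) : x != 0 -> y != 0 ->
  (1 < P1)%N -> (1 < P2)%N -> (P1 + P2 < P1 * P2)%N ->
  x * y / 2 \in Aint -> 2 / x ^+ P1 \in Aint -> 2 / y ^+ P2 \in Aint -> False.
Proof.
move=> nx ny h1 h2 h12 XA hx hy.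
have := rpredM (rpredM (rpredX (P1 * P2) XA) (rpredX P2 hx)) (rpredX P1 hy).
set t := (P1 * P2 - (P1 + P2))%N.
have ht : (P1 * P2 = P1 + P2 + t)%N by rewrite /t subnKC // ltnW.
have -> : (x * y / 2) ^+ (P1 * P2) * (2 / x ^+ P1) ^+ P2 * (2 / y ^+ P2) ^+ P1
          = 1%:R / 2 ^+ t.
  have e2 : (2 : algC) ^+ (P1 * P2) = 2 ^+ P1 * 2 ^+ P2 * 2 ^+ t by rewrite ht !exprD.
  rewrite !expr_div_n !exprMn e2 -!exprM [(P2 * P1)%N]mulnC.
  field; rewrite ?expf_neq0 ?pnatr_eq0 //.
apply/negP; apply: notAint => //.
by rewrite /t subn_gt0.
Qed.


Lemma main_nt (v1 v2 : algC) (e m : nat) : odd m -> v1 \in Aint -> v2 \in Aint ->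
  v1 ^+ (2 ^ e * m) = 1 -> v2 ^+ (2 ^ e * m) = 1 -> v1 != 1 -> v2 != 1 ->
  v1 != -1 -> v2 != -1 -> ~ (v1 ^+ 2 = -1 /\ v2 ^+ 2 = -1) ->
  (1 - v1) * (1 - v2) / 2 \notin Aint.
Proof.
move=> om A1 A2 h1 h2 n1 n2 m1 m2 nboth; apply/negP => XA.
have nx : 1 - v1 != 0 by rewrite subr_eq0 eq_sym.
have ny : 1 - v2 != 0 by rewrite subr_eq0 eq_sym.
have XA' : (1 - v2) * (1 - v1) / 2 \in Aint by rewrite [(1 - v2) * _]mulrC.
have kpos : forall (v : algC) (k : nat), v != -1 -> v ^+ (2 ^ k)%N = -1 -> (0 < k)%N.
  move=> v k vm; case: k => [|k] //; rewrite expn0 expr1 => hv.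
  by move: vm; rewrite hv eqxx.
case: (classify A1 h1) => [/eqP|[k1 hk1]|c1]; first by rewrite (negbTE n1).
- have k1p := kpos _ _ m1 hk1.
  have P1 : (1 < 2 ^ k1)%N by rewrite -{1}(expn0 2) ltn_exp2l.
  case: (classify A2 h2) => [/eqP|[k2 hk2]|c2]; first by rewrite (negbTE n2).
  + have k2p := kpos _ _ m2 hk2.
    have P2 : (1 < 2 ^ k2)%N by rewrite -{1}(expn0 2) ltn_exp2l.
    apply: (caseBB nx ny P1 P2 _ XA (two_pow_Aint A1 hk1) (two_pow_Aint A2 hk2)).
    have [e1|e1] := eqVneq k1 1%N.
      have [e2|e2] := eqVneq k2 1%N.
        by exfalso; apply: nboth; move: hk1 hk2; rewrite e1 e2.
      have : (2 ^ 2 <= 2 ^ k2)%N by rewrite leq_exp2l //; case: k2 k2p e2 {hk2 P2} => [|[|]].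
      move: P1 P2; set a := (2 ^ k1)%N; set b := (2 ^ k2)%N; move=> P1 P2 h4.
      rewrite expnS expn1 in h4 *; nia.
    have : (2 ^ 2 <= 2 ^ k1)%N by rewrite leq_exp2l //; case: k1 k1p e1 {hk1 P1} => [|[|]].
    move: P1 P2; set a := (2 ^ k1)%N; set b := (2 ^ k2)%N; move=> P1 P2 h4.
    rewrite expnS expn1 in h4 *; nia.
  + exact: (caseAB ny nx om P1 XA' c2 (two_pow_Aint A1 hk1)).
- case: (classify A2 h2) => [/eqP|[k2 hk2]|c2]; first by rewrite (negbTE n2).
  + have k2p := kpos _ _ m2 hk2.
    have P2 : (1 < 2 ^ k2)%N by rewrite -{1}(expn0 2) ltn_exp2l.
    exact: (caseAB nx ny om P2 XA c1 (two_pow_Aint A2 hk2)).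
  + have := rpredM (rpredM XA c1) c2.
    have -> : (1 - v1) * (1 - v2) / 2 * (m%:R / (1 - v1)) * (m%:R / (1 - v2))
       = (m * m)%:R / 2 ^+ 1 by rewrite natrM expr1; field; rewrite nx ny.
    by apply/negP; apply: notAint => //; rewrite oddM om.
Qed.

End NT.

Section Walk.
Local Open Scope ring_scope.
Variables (V : finType) (adj : rel V).
Hypothesis hsym : forall x y, adj x y = adj y x.
Hypothesis hreg : forall x, deg adj x = 4%N.
Local Notation A := (Defs.arc adj).

Lemma sum_eq1 (T : finType) (c : T) (F : T -> algC) :
  \sum_(x : T) (x == c)%:R * F x = F c.
Proof.
rewrite (bigD1 c) //= eqxx mul1r big1 ?addr0 // => x /negbTE ->.
by rewrite mul0r.
Qed.

Lemma sum_eq1' (T : finType) (c : T) (F : T -> algC) :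
  \sum_(x : T) (c == x)%:R * F x = F c.
Proof. by rewrite -(sum_eq1 c); apply: eq_bigr => x _; rewrite eq_sym. Qed.

Lemma sum_eq1r (T : finType) (c : T) (F : T -> algC) :
  \sum_(x : T) F x * (x == c)%:R = F c.
Proof. by rewrite -(sum_eq1 c); apply: eq_bigr => x _; rewrite mulrC. Qed.

Lemma sum_arc (F : V -> V -> algC) :
  \sum_(e : A) F (val e).1 (val e).2 = \sum_(w : V) \sum_(y : V) (adj w y)%:R * F w y.
Proof.
have -> : \sum_(w : V) \sum_(y : V) (adj w y)%:R * F w y =
          \sum_(p : V * V | adj p.1 p.2) F p.1 p.2.
  rewrite pair_big [in RHS]big_mkcond /=; apply: eq_big => // -[w y] _ /=.
  by case: (adj w y); rewrite ?mul1r ?mul0r.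
rewrite (reindex_omap (val : A -> V * V) insub); last first.
  by move=> p hp; rewrite insubT.
by apply: eq_bigl => -[p hp] /=; rewrite hp insubT /= eqxx.
Qed.

Lemma degE (x : V) : \sum_(y : V) (adj x y)%:R = 4 :> algC.
Proof.
rewrite -[4]/(4%N%:R) -(hreg x) /deg -sum1_card natr_sum [RHS]big_mkcond /=.
by apply: eq_bigr => y _; rewrite !inE; case: (adj x y).
Qed.

Lemma bdryE (x : V) (e : A) : bdry x e = (x == terminus e)%:R / 2.
Proof.
rewrite /bdry hreg mulrC.
have -> : (4%N%:R : algC) = 2 ^+ 2 by rewrite expr2 -natrM.
by rewrite sqrCK // ler0n.
Qed.

Lemma bdry_adjE (e : A) (x : V) : bdry_adj e x = (x == terminus e)%:R / 2.
Proof. by rewrite /bdry_adj bdryE rmorphM fmorphV !rmorph_nat. Qed.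

Lemma rev_subproof (e : A) : adj (val e).2 (val e).1.
Proof. by rewrite hsym; exact: (valP e). Qed.

Definition rev (e : A) : A := Sub ((val e).2, (val e).1) (rev_subproof e).

Lemma val_rev e : val (rev e) = ((val e).2, (val e).1).
Proof. by rewrite /rev SubK. Qed.

Lemma revK : involutive rev.
Proof. by move=> e; apply: val_inj; rewrite !val_rev; case: (val e). Qed.

Lemma mul_half (a b : algC) : a / 2 * (b / 2) = a * (b / 4).
Proof. by field. Qed.

Lemma coinE (g f : A) : coin g f = (terminus g == terminus f)%:R / 2 - (g == f)%:R.
Proof.
rewrite /coin; congr (_ - _).
under eq_bigr => x _ do rewrite bdry_adjE bdryE mul_half.
by rewrite sum_eq1; field.
Qed.

Lemma walkUE (e f : A) :
  walkU e f = ((val e).1 == terminus f)%:R / 2 - (rev e == f)%:R.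
Proof.
rewrite /walkU.
have -> : \sum_(g : A) shift e g * coin g f = \sum_(g : A) (g == rev e)%:R * coin g f.
  apply: eq_bigr => g _; rewrite /shift; congr (_%:R * _).
  rewrite -(inj_eq (@inv_inj _ rev revK)) revK -val_eqE val_rev.
  by rewrite eq_sym.
by rewrite sum_eq1 coinE /terminus val_rev.
Qed.

Lemma applyUE (v : A -> algC) (e : A) :
  applyU v e = 2^-1 * \sum_(f : A) (terminus f == (val e).1)%:R * v f - v (rev e).
Proof.
rewrite /applyU.
under eq_bigr => f _ do rewrite walkUE mulrBl.
rewrite sumrB sum_eq1' mulr_sumr; congr (_ - _).
by apply: eq_bigr => f _; rewrite eq_sym mulrAC mulrC.
Qed.


Definition Pv (v : A -> algC) (z : V) := \sum_(f : A) (terminus f == z)%:R * v f.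
Definition Qv (v : A -> algC) (z : V) := \sum_(f : A) ((val f).1 == z)%:R * v f.

Lemma sum_rev (F : A -> algC) : \sum_(e : A) F (rev e) = \sum_(e : A) F e.
Proof. by rewrite [RHS](reindex_inj (inv_inj revK)). Qed.

Lemma adj_arc (p : V) (F : V -> algC) :
  \sum_(f : A) (p == (val f).1)%:R * F (val f).2 = \sum_(z : V) (adj p z)%:R * F z.
Proof.
rewrite (sum_arc (fun w y => (p == w)%:R * F y)).
under eq_bigr => w _ do under eq_bigr => y _ do rewrite mulrCA.
under eq_bigr => w _ do rewrite -mulr_sumr.
by rewrite sum_eq1'.
Qed.

Lemma P_step (v : A -> algC) (z : V) :
  Pv (applyU v) z = 2^-1 * \sum_(w : V) (adj w z)%:R * Pv v w - Qv v z.
Proof.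
rewrite /Pv.
under eq_bigr => e _ do rewrite applyUE mulrBr.
rewrite sumrB; congr (_ - _); last first.
  rewrite /Qv -(sum_rev (fun e => (terminus e == z)%:R * v (rev e))) /=.
  by apply: eq_bigr => e _; rewrite revK /terminus val_rev.
transitivity (2^-1 * \sum_(f : A) (adj (terminus f) z)%:R * v f).
  under eq_bigr => e _ do rewrite mulrCA mulr_sumr.
  rewrite -mulr_sumr exchange_big /=; congr (_ * _); apply: eq_bigr => f _.
  under eq_bigr => e _ do rewrite mulrCA mulrC.
  have h := adj_arc (terminus f) (fun y => (y == z)%:R); rewrite /= sum_eq1r in h.
  rewrite -h mulr_suml.
  by apply: eq_bigr => e _; rewrite /terminus; ring.
congr (_ * _); symmetry.
under eq_bigr => w _ do rewrite mulr_sumr.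
rewrite exchange_big /=; apply: eq_bigr => f _.
under eq_bigr => w _ do rewrite mulrA [_ * (_ == _)%:R]mulrC -mulrA.
by rewrite sum_eq1'.
Qed.


Lemma outdeg (z : V) : \sum_(e : A) ((val e).1 == z)%:R = 4 :> algC.
Proof.
rewrite (sum_arc (fun w y => (w == z)%:R)).
under eq_bigr => w _ do rewrite -mulr_suml degE.
by rewrite sum_eq1r.
Qed.

Lemma indeg (z : V) : \sum_(e : A) (terminus e == z)%:R = 4 :> algC.
Proof.
rewrite /terminus (sum_arc (fun w y => (y == z)%:R)).
under eq_bigr => w _ do rewrite sum_eq1r.
by rewrite -(degE z); apply: eq_bigr => y _; rewrite hsym.
Qed.

Lemma Q_step (v : A -> algC) (z : V) : Qv (applyU v) z = Pv v z.
Proof.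
rewrite /Qv.
under eq_bigr => e _ do rewrite applyUE mulrBr.
rewrite sumrB.
have -> : \sum_(e : A) ((val e).1 == z)%:R * v (rev e) = Pv v z.
  rewrite [LHS](reindex_inj (inv_inj revK)) /Pv.
  by apply: eq_bigr => e _; rewrite revK val_rev.
have -> : \sum_(e : A) ((val e).1 == z)%:R *
   (2^-1 * \sum_(f : A) (terminus f == (val e).1)%:R * v f)
   = \sum_(e : A) ((val e).1 == z)%:R * (2^-1 * Pv v z).
  apply: eq_bigr => e _; case: eqP => [->|]; last by rewrite !mul0r.
  by [].
by rewrite -mulr_suml outdeg; field.
Qed.


Lemma P0 (x z : V) : Pv (vertex_state x) z = 2 * (x == z)%:R.
Proof.
rewrite /Pv /vertex_state.
have -> : \sum_(f : A) (terminus f == z)%:R * bdry_adj f x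
          = \sum_(f : A) (terminus f == z)%:R * ((x == z)%:R / 2).
  apply: eq_bigr => f _; rewrite bdry_adjE.
  by case: eqP => [->|]; rewrite ?mul0r.
by rewrite -mulr_suml indeg; field.
Qed.

Lemma Q0 (x z : V) : Qv (vertex_state x) z = (adj z x)%:R / 2.
Proof.
rewrite /Qv /vertex_state.
under eq_bigr => f _ do rewrite bdry_adjE /terminus.
rewrite (sum_arc (fun w y => (w == z)%:R * ((x == y)%:R / 2))).
under eq_bigr => w _ do under eq_bigr => y _ do rewrite mulrCA.
under eq_bigr => w _ do rewrite -mulr_sumr.
rewrite sum_eq1.
under eq_bigr => y _ do rewrite mulrCA.
by rewrite sum_eq1'.
Qed.

Definition pseq (x : V) (t : nat) (z : V) := Pv (iter t (@applyU V adj) (vertex_state x)) z.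

Lemma p_rec (x : V) t z :
  pseq x t.+2 z = 2^-1 * \sum_(w : V) (adj w z)%:R * pseq x t.+1 w - pseq x t z.
Proof. by rewrite /pseq iterS P_step iterS Q_step. Qed.

Lemma p_0 (x z : V) : pseq x 0 z = 2 * (x == z)%:R.
Proof. exact: P0. Qed.

Lemma p_1 (x z : V) : pseq x 1 z = (adj x z)%:R / 2.
Proof.
rewrite /pseq /= P_step Q0.
under eq_bigr => w _ do rewrite P0 mulrA mulrC.
by rewrite sum_eq1' hsym; field.
Qed.

Fixpoint rpair (m : algC) (t : nat) : algC * algC :=
  if t is t'.+1 then let pq := rpair m t' in (pq.2, m / 2 * pq.2 - pq.1)
  else (1, m / 4).

Lemma PST_char (mu : algC) (chi : V -> algC) :
  (forall w, \sum_(z : V) (adj w z)%:R * chi z = mu * chi w) ->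
  PST_vertex adj ->
  exists x y (tau : nat) (gamma : algC),
    [/\ (0 < tau)%N, `|gamma| = 1 & (rpair mu tau).1 * chi x = gamma * chi y].
Proof.
move=> hchi [x [y [tau [gamma [_ tpos gn hst]]]]].
exists x, y, tau, gamma; split => //.
pose c t := \sum_(z : V) pseq x t z * chi z.
have c0 : c 0%N = 2 * chi x.
  rewrite /c; under eq_bigr => z _ do rewrite p_0 -mulrA.
  by rewrite -mulr_sumr sum_eq1'.
have c1 : c 1%N = mu / 2 * chi x.
  rewrite /c; under eq_bigr => z _ do rewrite p_1 mulrAC.
  by rewrite -mulr_suml hchi mulrAC.
have crec : forall t, c t.+2 = mu / 2 * c t.+1 - c t.
  move=> t; rewrite /c.
  under eq_bigr => z _ do rewrite p_rec mulrBl.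
  rewrite sumrB; congr (_ - _).
  under eq_bigr => z _ do rewrite -mulrA mulr_suml.
  rewrite -mulr_sumr exchange_big /= mulr_sumr mulr_sumr.
  apply: eq_bigr => w _.
  under eq_bigr => z _ do rewrite mulrAC.
  rewrite -mulr_suml hchi; ring.
have cr : forall t, c t = 2 * chi x * (rpair mu t).1 /\ c t.+1 = 2 * chi x * (rpair mu t).2.
  elim=> [|t [IH1 IH2]] /=; first by rewrite c0 c1; split; [ring | field].
  by split => //; rewrite crec IH1 IH2; ring.
have ctau : c tau = 2 * gamma * chi y.
  have hp : forall z, pseq x tau z = gamma * Pv (vertex_state y) z.
    move=> z; rewrite /pseq /Pv mulr_sumr; apply: eq_bigr => f _.
    by rewrite hst mulrCA.
  rewrite /c.
  transitivity (\sum_(z : V) (y == z)%:R * (2 * gamma * chi z)).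
    by apply: eq_bigr => z _; rewrite hp P0; ring.
  by rewrite sum_eq1'.
have [h _] := cr tau.
have : 2 * (chi x * (rpair mu tau).1) = 2 * (gamma * chi y).
  by rewrite mulrA -h ctau mulrA.
have n2 : (2 : algC) != 0 by rewrite pnatr_eq0.
by move/(mulfI n2); rewrite mulrC.
Qed.

End Walk.

Section Fin.
Local Open Scope ring_scope.

Lemma real_pm1 (r : algC) : r \is Num.real -> `|r| = 1 -> r = 1 \/ r = -1.
Proof.
move=> rr nr; have : r ^+ 2 = 1 by rewrite -real_normK // nr expr1n.
move=> h; have : (r - 1) * (r + 1) = 0 by rewrite -subr_sqr h expr1n subrr.
move/eqP; rewrite mulf_eq0 subr_eq0 addr_eq0 => /orP[] /eqP; by [left | right].
Qed.

Lemma rpair_real (m : algC) : m \is Num.real ->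
  forall t, (rpair m t).1 \is Num.real /\ (rpair m t).2 \is Num.real.
Proof.
move=> mr; elim=> [|t [h1 h2]] /=.
  by split; rewrite ?rpred1 // rpred_div // rpred_nat.
split=> //; by rewrite rpredB // rpredM // rpred_div // rpred_nat.
Qed.

Lemma rpair_zeta (m z : algC) : z != 0 -> z + z^-1 = m / 2 ->
  forall t, (rpair m t).1 = (z ^+ t + (z ^+ t)^-1) / 2 /\
            (rpair m t).2 = (z ^+ t.+1 + (z ^+ t.+1)^-1) / 2.
Proof.
move=> nz hz; elim=> [|t [h1 h2]] /=.
  split; first by rewrite expr0 invr1; field.
  by rewrite expr1 hz; field.
split => //; rewrite h1 h2 -hz !exprS.
have nzt : z ^+ t != 0 by rewrite expf_neq0.
by field; rewrite nz nzt.
Qed.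

Lemma half_Aint (m : algC) (tau : nat) : (0 < tau)%N ->
  (rpair m tau).1 = 1 \/ (rpair m tau).1 = -1 -> m / 2 \in Aint.
Proof.
move=> tpos hr.
pose lam := m / 4; pose s := sqrtC (lam ^+ 2 - 1).
pose z := lam + s.
have zinv : z * (lam - s) = 1 by rewrite /z mulrC -subr_sqr /s sqrtCK; ring.
have nz : z != 0 by apply/eqP => z0; move: zinv; rewrite z0 mul0r => /eqP; rewrite eq_sym oner_eq0.
have zi : z^-1 = lam - s by rewrite -[LHS]mulr1 -zinv mulKf.
have hz : z + z^-1 = m / 2 by rewrite zi /z /lam; field.
have [h1 _] := rpair_zeta nz hz tau.
set u := z ^+ tau in h1.
have nu : u != 0 by rewrite expf_neq0.
have hu : u ^+ 2 = 1.
  have : exists e : algC, e ^+ 2 = 1 /\ (u + u^-1) / 2 = e.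
    by case: hr => h; [exists 1 | exists (-1)]; rewrite -h1 h; split => //; rewrite ?expr1n ?sqrrN ?expr1n.
  case=> e [e2 he].
  have : (u - e) ^+ 2 = 0.
    have : u ^+ 2 + 1 = 2 * e * u.
      by rewrite -he; field.
    move=> hh; transitivity ((u ^+ 2 + 1) - 2 * e * u + (e ^+ 2 - 1)); first ring.
    by rewrite hh e2; ring.
  move/eqP; rewrite expf_eq0 /= subr_eq0 => /eqP ->; exact: e2.
have z2 : z ^+ (2 * tau) = 1 by rewrite mulnC exprM.
have zA : z \in Aint.
  apply: (@Aint_unity_root (2 * tau)); first by rewrite muln_gt0.
  by rewrite unity_rootE z2.
have ziA : z^-1 \in Aint.
  have -> : z^-1 = z ^+ (2 * tau).-1.
    apply: (mulfI nz); rewrite mulfV // -exprS prednK ?z2 //.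
    by rewrite muln_gt0.
  exact: rpredX.
by rewrite -hz rpredD.
Qed.

End Fin.

Section Circ.
Local Open Scope ring_scope.

Lemma sum_ord_mem (n : nat) (S' : seq nat) (F : nat -> algC) :
  uniq S' -> all (fun i => (i < n)%N) S' ->
  \sum_(s : 'I_n) ((s : nat) \in S')%:R * F s = \sum_(i <- S') F i.
Proof.
elim: S' => [|i S' IH] /=.
  by move=> _ _; rewrite big_nil big1 // => s _; rewrite mul0r.
case/andP => niS uS /andP[lin aS]; rewrite big_cons -IH //.
rewrite -[F i](_ : \sum_(s : 'I_n) ((s : nat) == i)%:R * F s = F i).
  rewrite -big_split /=; apply: eq_bigr => s _; rewrite inE.
  case: eqP => [->|] /=; last by rewrite mul0r add0r.
  by rewrite (negbTE niS) mul0r addr0.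
rewrite (bigD1 (Ordinal lin)) //= eqxx mul1r big1 ?addr0 // => s hs.
have -> : ((s : nat) == i) = false.
  by apply/negbTE; apply: contra hs => /eqP e; apply/eqP; apply: val_inj.
by rewrite mul0r.
Qed.

Lemma sum_shift (n : nat) (w : 'I_n) (S' : seq nat) (F : nat -> algC) :
  uniq S' -> all (fun i => (i < n)%N) S' ->
  \sum_(z : 'I_n) (((z + n - w) %% n)%N \in S')%:R * F ((z + n - w) %% n)%N
  = \sum_(i <- S') F i.
Proof.
move=> uS aS.
have npos : (0 < n)%N by apply: leq_ltn_trans (ltn_ord w).
pose g (z : 'I_n) : 'I_n := Ordinal (ltn_pmod (z + n - w) npos).
pose h (s : 'I_n) : 'I_n := Ordinal (ltn_pmod (s + w) npos).
have ghK : cancel g h.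
  move=> z; apply: val_inj => /=.
  rewrite modnDml subnK; last by rewrite (leq_trans (ltnW (ltn_ord w))) // leq_addl.
  by rewrite modnDr modn_small.
rewrite -(sum_ord_mem F uS aS).
rewrite [RHS](reindex_inj (can_inj ghK)) /=.
by [].
Qed.


Lemma modE (n : nat) (x y : 'I_n) :
  ((y + n - x) %% n = if (x <= y)%N then y - x else y + n - x)%N.
Proof.
case: leqP => hxy.
  have -> : (y + n - x = (y - x) + n)%N by lia.
  by rewrite modnDr modn_small //; have := ltn_ord y; lia.
by rewrite modn_small //; have := ltn_ord y; have := ltn_ord x; lia.
Qed.

Lemma deg_sum (V : finType) (adj : rel V) (x : V) :
  (deg adj x)%:R = \sum_(y : V) (adj x y)%:R :> algC.
Proof.
rewrite /deg -sum1_card natr_sum [LHS]big_mkcond /=.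
by apply: eq_bigr => y _; rewrite !inE; case: (adj x y).
Qed.

Variables l a b : nat.
Hypothesis hl : (2 <= l)%N.
Hypothesis ha : (1 <= a <= l - 1)%N.
Hypothesis hb : (1 <= b <= l - 1)%N.
Local Notation n := (2 * l)%N.
Local Notation S := [:: a; (n - a)%N; b; (n - b)%N].
Local Notation adj := (circ_adj n S).

Lemma adj_sym (x y : 'I_n) : adj x y = adj y x.
Proof.
rewrite /circ_adj !modE !inE.
have := ltn_ord x; have := ltn_ord y.
move: ha hb => /andP[? ?] /andP[? ?].
case: (leqP x y); case: (leqP y x) => *; lia.
Qed.

Lemma deg2 (w : 'I_n) : a = b -> deg adj w = 2%N.
Proof.
move=> eab; apply/eqP; rewrite -(eqr_nat algC) deg_sum.
have -> : \sum_(z : 'I_n) (adj w z)%:R =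
   \sum_(z : 'I_n) (((z + n - w) %% n)%N \in [:: a; (n - a)%N])%:R * (fun _ => 1 : algC) ((z + n - w) %% n)%N.
  apply: eq_bigr => z _; rewrite mulr1 /circ_adj eab !inE.
  by set d := ((z + n - w) %% n)%N; congr (_%:R); lia.
rewrite (@sum_shift n w _ (fun _ => 1)).
- by rewrite !big_cons big_nil addr0.
- by rewrite /= inE andbT; move: ha => /andP[? ?]; apply/eqP; lia.
- by rewrite /= andbT; move: ha => /andP[? ?]; apply/andP; split; lia.
Qed.


Lemma uniqS : a != b -> uniq S.
Proof.
move=> /eqP nab; rewrite /= !inE; move: ha hb => /andP[? ?] /andP[? ?].
lia.
Qed.

Lemma allS : all (fun i => (i < n)%N) S.
Proof.
rewrite /=; move: ha hb => /andP[? ?] /andP[? ?].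
lia.
Qed.

Lemma eigen (w0 : algC) (w : 'I_n) : n.-primitive_root w0 -> a != b ->
  \sum_(z : 'I_n) (adj w z)%:R * w0 ^+ z =
  (w0 ^+ a + w0 ^+ (n - a) + w0 ^+ b + w0 ^+ (n - b)) * w0 ^+ w.
Proof.
move=> pw nab.
have e1 : forall z : 'I_n, w0 ^+ z = w0 ^+ w * w0 ^+ ((z + n - w) %% n).
  move=> z; rewrite (prim_expr_mod pw) -exprD subnKC.
    by rewrite exprD (prim_expr_order pw) mulr1.
  by rewrite (leq_trans (ltnW (ltn_ord w))) // leq_addl.
under eq_bigr => z _ do rewrite e1 mulrCA.
rewrite -mulr_sumr /circ_adj.
rewrite (@sum_shift n w _ (fun i => w0 ^+ i)) ?uniqS ?allS //.
by rewrite !big_cons big_nil addr0 mulrC !addrA.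
Qed.

End Circ.

Section Final.
Local Open Scope ring_scope.

Lemma dec2 (n : nat) : (0 < n)%N -> exists e m, odd m /\ n = (2 ^ e * m)%N.
Proof.
elim/ltn_ind: n => n IH npos.
case on: (odd n); first by exists 0%N, n; rewrite expn0 mul1n.
have hn : n = (n./2).*2 by rewrite -{1}(odd_double_half n) on add0n.
have h1 : (n./2 < n)%N by move: npos; rewrite {2}hn -addnn; lia.
have h2 : (0 < n./2)%N by move: npos; rewrite {1}hn -addnn; lia.
have [e [m [om hm]]] := IH _ h1 h2.
by exists e.+1, m; split => //; rewrite hn hm expnS -mul2n mulnA.
Qed.

Lemma norm_prim (n : nat) (w0 : algC) : n.-primitive_root w0 -> `|w0| = 1.
Proof.
move=> pw; apply/eqP; rewrite -(pexpr_eq1 (prim_order_gt0 pw)) ?normr_ge0 //.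
by rewrite -normrX (prim_expr_order pw) normr1.
Qed.

Lemma powinv (n k : nat) (w0 : algC) : n.-primitive_root w0 -> (k <= n)%N ->
  (w0 ^+ k)^-1 = w0 ^+ (n - k).
Proof.
move=> pw kn.
have nz : w0 ^+ k != 0.
  by rewrite expf_neq0 //; apply/eqP => w00; move: (norm_prim pw); rewrite w00 normr0 => /eqP; rewrite eq_sym oner_eq0.
apply: (mulfI nz); rewrite mulfV // -exprD subnKC //.
by rewrite (prim_expr_order pw).
Qed.

Lemma conj_pow (n k : nat) (w0 : algC) : n.-primitive_root w0 -> (k <= n)%N ->
  (w0 ^+ k)^* = w0 ^+ (n - k).
Proof.
move=> pw kn; rewrite -powinv // rmorphXn /= -exprVn.
by rewrite invC_norm (norm_prim pw) expr1n invr1 mul1r.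
Qed.

Lemma four_mod (l c : nat) : (0 < c < l)%N -> ((4 * c) %% (2 * l) = 0)%N -> (2 * c = l)%N.
Proof.
move=> hc hm; have := divn_eq (4 * c) (2 * l); rewrite hm addn0.
move: ((4 * c) %/ (2 * l))%N => q hq.
by case: q hq => [|[|q]] hq; lia.
Qed.

Lemma vpow (n e m k : nat) (w0 : algC) : n.-primitive_root w0 -> ~~ odd n ->
  n = (2 ^ e * m)%N -> (- w0 ^+ k) ^+ (2 ^ e * m) = 1.
Proof.
move=> pw on hn; rewrite -hn exprNn -exprM mulnC exprM (prim_expr_order pw) expr1n mulr1.
by rewrite -(odd_double_half n) (negbTE on) add0n -mul2n exprM sqrrN expr1n expr1n.
Qed.

Lemma final_contra (l a b : nat) (w0 : algC) : (2 <= l)%N ->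
  (1 <= a <= l - 1)%N -> (1 <= b <= l - 1)%N -> a != b -> (a + b != l)%N ->
  (2 * l).-primitive_root w0 ->
  (w0 ^+ a + w0 ^+ (2 * l - a) + w0 ^+ b + w0 ^+ (2 * l - b)) / 2 \notin Aint.
Proof.
move=> hl /andP[ha1 ha2] /andP[hb1 hb2] /eqP nab /eqP apb pw.
set n := (2 * l)%N.
have an : (a <= n)%N by rewrite /n; lia.
have bn : (b <= n)%N by rewrite /n; lia.
have w0A : w0 \in Aint := Aint_prim_root pw.
have wn : w0 ^+ n = 1 := prim_expr_order pw.
have peq : forall i j, w0 ^+ i = w0 ^+ j -> (i %% n = j %% n)%N.
  by move=> i j /eqP; rewrite (eq_prim_root_expr pw) => /eqP.
have wl : w0 ^+ l = -1.
  have h2 : (w0 ^+ l - 1) * (w0 ^+ l + 1) = 0.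
    by rewrite -subr_sqr -exprM mulnC (prim_expr_order pw) expr1n subrr.
  move/eqP: h2; rewrite mulf_eq0 subr_eq0 addr_eq0 => /orP[/eqP h|/eqP //].
  have := peq l 0%N; rewrite expr0 h => /(_ erefl); rewrite mod0n modn_small /n; lia.
have modab : ((a + (n - b)) %% n = if (b <= a)%N then a - b else a + (n - b))%N.
  case: leqP => hba.
    have -> : (a + (n - b) = (a - b) + n)%N by rewrite /n; lia.
    by rewrite modnDr modn_small // /n; lia.
  by rewrite modn_small // /n; lia.
have npos : (0 < n)%N by rewrite /n; lia.
have [e [m [om hm]]] := dec2 npos.
set v1 := - w0 ^+ (a + b); set v2 := - w0 ^+ (a + (n - b)).
have nX : w0 ^+ a != 0 by rewrite expf_neq0 // -normr_eq0 (norm_prim pw) oner_eq0.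
have nY : w0 ^+ b != 0 by rewrite expf_neq0 // -normr_eq0 (norm_prim pw) oner_eq0.
have hid : (1 - v1) * (1 - v2) / 2 =
    w0 ^+ a * ((w0 ^+ a + w0 ^+ (n - a) + w0 ^+ b + w0 ^+ (n - b)) / 2).
  rewrite /v1 /v2 !exprD -(powinv pw an) -(powinv pw bn).
  by field; rewrite nX nY.
apply/negP => hA.
have hX : (1 - v1) * (1 - v2) / 2 \in Aint by rewrite hid rpredM // rpredX.
move: hX; apply/negP; apply: (main_nt (e:=e) om).
- by rewrite rpredN rpredX.
- by rewrite rpredN rpredX.
- by rewrite /v1 (vpow _ pw _ hm) // /n oddM.
- by rewrite /v2 (vpow _ pw _ hm) // /n oddM.
- apply/eqP => h; have : w0 ^+ (a + b) = w0 ^+ l by rewrite wl -h /v1 opprK.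
  move/peq; rewrite !modn_small /n; lia.
- apply/eqP => h; have : w0 ^+ (a + (n - b)) = w0 ^+ l by rewrite wl -h /v2 opprK.
  move/peq; rewrite modab (modn_small (_ : l < n)%N) /n; last by lia.
  case: leqP; lia.
- apply/eqP => h; have : w0 ^+ (a + b) = w0 ^+ 0 by rewrite expr0 -[1]opprK -h /v1 opprK.
  move/peq; rewrite mod0n modn_small /n; lia.
- apply/eqP => h; have : w0 ^+ (a + (n - b)) = w0 ^+ 0 by rewrite expr0 -[1]opprK -h /v2 opprK.
  move/peq; rewrite modab mod0n /n.
  case: leqP; lia.
- rewrite /v1 /v2 !sqrrN -!exprM => -[h1 h2].
  have h4a : w0 ^+ (4 * a) = 1.
    have : w0 ^+ ((a + b) * 2) * w0 ^+ ((a + (n - b)) * 2) = 1 by rewrite h1 h2 mulrNN mulr1.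
    rewrite -exprD (_ : ((a + b) * 2 + (a + (n - b)) * 2 = 4 * a + n * 2)%N); last by rewrite /n; lia.
    by rewrite exprD [w0 ^+ (n * 2)]exprM wn expr1n mulr1.
  have h4b : w0 ^+ (4 * b) = 1.
    have : w0 ^+ ((a + (n - b)) * 2) * w0 ^+ (4 * b) = w0 ^+ ((a + b) * 2) * w0 ^+ (n * 2).
      by rewrite -!exprD; congr (_ ^+ _); rewrite /n; lia.
    rewrite h1 h2 [w0 ^+ (n * 2)]exprM wn expr1n mulr1 => h.
    by rewrite -[LHS]opprK -(mulN1r (w0 ^+ (4 * b))) h opprK.
  have ea : (2 * a = l)%N.
    apply: four_mod; first by lia.
    by have := peq (4 * a)%N 0%N; rewrite h4a expr0 mod0n => /(_ erefl).
  have eb : (2 * b = l)%N.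
    apply: four_mod; first by lia.
    by have := peq (4 * b)%N 0%N; rewrite h4b expr0 mod0n => /(_ erefl).
  lia.
Qed.

Lemma mu_real (l a b : nat) (w0 : algC) : (a <= 2 * l)%N -> (b <= 2 * l)%N ->
  (2 * l).-primitive_root w0 ->
  w0 ^+ a + w0 ^+ (2 * l - a) + w0 ^+ b + w0 ^+ (2 * l - b) \is Num.real.
Proof.
move=> an bn pw; apply/CrealP; rewrite !rmorphD /=.
rewrite !(conj_pow pw) ?leq_subr // !subKn //.
ring.
Qed.

Lemma norm_one (r gamma : algC) (w0 : algC) (n x y : nat) :
  n.-primitive_root w0 -> `|gamma| = 1 -> r * w0 ^+ x = gamma * w0 ^+ y -> `|r| = 1.
Proof.
move=> pw gn /(congr1 Num.norm); rewrite !normrM !normrX (norm_prim pw) gn !expr1n.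
by rewrite !mulr1.
Qed.

End Final.

Theorem theorem9p19 (l a b : nat) :
  (2 <= l)%N -> ~~ odd l ->
  (1 <= a <= l - 1)%N -> (1 <= b <= l - 1)%N ->
  connected_graph (circ_adj (2 * l) [:: a; 2 * l - a; b; 2 * l - b]) ->
  regular (circ_adj (2 * l) [:: a; 2 * l - a; b; 2 * l - b]) 4 ->
  (a + b != l)%N ->
  ~ PST_vertex (circ_adj (2 * l) [:: a; 2 * l - a; b; 2 * l - b]).
Proof.
move=> hl hodd ha hb _ hreg hab pst.
have npos : (0 < 2 * l)%N by lia.
have nab : a != b.
  apply/eqP => eab; have := deg2 hl ha hb (Ordinal npos) eab.
  by rewrite hreg.
have [w0 pw] := C_prim_root_exists npos.
have hchi := fun w => eigen hl ha hb w pw nab.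
have [x [y [tau [gamma [tpos gn heq]]]]] :=
  PST_char (adj_sym hl ha hb) hreg (chi := fun z : 'I_(2 * l) => (w0 ^+ z)%R) hchi pst.
have an : (a <= 2 * l)%N by move: ha => /andP[? ?]; lia.
have bn : (b <= 2 * l)%N by move: hb => /andP[? ?]; lia.
have [rr _] := rpair_real (mu_real an bn pw) tau.
have nr := norm_one pw gn heq.
have := half_Aint tpos (real_pm1 rr nr).
by apply/negP; apply: final_contra.
Qed.
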